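(* Consider a finite reward-free MDP with occupancy polytope $\Phi$ and a dataset $\mathcal D=\{(d_e^k,\epsilon^k)\}_{k=1}^K$ with $d_e^k\in\Phi$, $\epsilon^k\ge0$. Let $\mathcal P\subseteq[K]\times[K]$ and margins $\epsilon_{ij}\ge0$ for $(i,j)\in\mathcal P$, and let \[\mathcal R_{\mathcal P}:=\{r\in\mathcal R(\mathcal D): r^\top(d_e^i-d_e^j)\ge\epsilon_{ij}\ \forall(i,j)\in\mathcal P\}.\] Let $\mathcal G$ be the directed graph with vertex set $[K]$ and edge set $\mathcal P$. For any simple directed path $p=(i_0\to i_1\to\cdots\to i_m)$ in $\mathcal G$, with $\epsilon(p):=\sum_{\ell=1}^m\epsilon_{i_{\ell-1}i_\ell}$, if $\mathcal R_{\mathcal P}\ne\emptyset$ then $\mathrm{rng}(\mathcal R_{\mathcal P})\ge\epsilon(p)$.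
   Context: The MDP has finite $S$, $A$, transitions $P$, initial distribution $\mu_0$, discount $\gamma\in(0,1)$; $(Md)(s)=\sum_a d(s,a)-\gamma\sum_{s',a'}P(s\mid s',a')d(s',a')$ and $\Phi=\{d\ge0:Md=(1-\gamma)\mu_0\}$. Rewards are $r\in\Delta(S\times A)$. $\mathrm{subopt}(r,d):=\max_{\tilde d\in\Phi}r^\top\tilde d-r^\top d$; $\mathcal R(\mathcal D):=\{r\in\Delta(S\times A):\mathrm{subopt}(r,d_e^k)\le\epsilon^k\ \forall k\}$. For a set of rewards $\mathcal R$, $\mathrm{rng}(\mathcal R):=\min_{r\in\mathcal R}\big(\max_{\tilde d\in\Phi}r^\top\tilde d-\min_{d\in\Phi}r^\top d\big)$. *)

(* Defs.v *)
From HB Require Import structures.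
From mathcomp Require Import all_boot all_order all_algebra.
From mathcomp Require Import classical_sets reals.
Set Implicit Arguments. Unset Strict Implicit. Unset Printing Implicit Defensive.
Import Order.TTheory GRing.Theory Num.Theory.
Local Open Scope ring_scope.
Local Open Scope classical_set_scope.

Section MDP.
Variables (R : realType) (S A : finType).
(* Ptr s s' a = P(s | s', a) *)
Variables (Ptr : S -> S -> A -> R) (mu0 : S -> R) (gamma : R).

Definition inner (r d : S -> A -> R) : R := \sum_(s : S) \sum_(a : A) r s a * d s a.

Definition Mop (d : S -> A -> R) (s : S) : R :=
  \sum_(a : A) d s a - gamma * \sum_(s' : S) \sum_(a' : A) Ptr s s' a' * d s' a'.

Definition Phi : set (S -> A -> R) :=
  [set d | (forall s a, 0 <= d s a) /\ (forall s, Mop d s = (1 - gamma) * mu0 s)].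

Definition simplexSA : set (S -> A -> R) :=
  [set r | (forall s a, 0 <= r s a) /\ \sum_(s : S) \sum_(a : A) r s a = 1].

Definition maxval (r : S -> A -> R) : R := sup [set inner r d | d in Phi].
Definition minval (r : S -> A -> R) : R := inf [set inner r d | d in Phi].

Definition subopt (r d : S -> A -> R) : R := maxval r - inner r d.

Definition feasR (K : nat) (de : 'I_K -> S -> A -> R) (eps : 'I_K -> R)
  : set (S -> A -> R) :=
  [set r | simplexSA r /\ forall k, subopt r (de k) <= eps k].

Definition rng (Rset : set (S -> A -> R)) : R :=
  inf [set maxval r - minval r | r in Rset].

Definition feasRP (K : nat) (de : 'I_K -> S -> A -> R) (eps : 'I_K -> R)
  (Pset : rel 'I_K) (epsij : 'I_K -> 'I_K -> R) : set (S -> A -> R) :=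
  [set r | feasR de eps r /\
     forall i j, Pset i j -> epsij i j <= inner r (fun s a => de i s a - de j s a)].
End MDP.

(* epsilon(p) for the path i0 -> p_1 -> ... -> p_m *)
Definition path_eps (R : realType) (K : nat) (epsij : 'I_K -> 'I_K -> R)
  (i0 : 'I_K) (p : seq 'I_K) : R :=
  \sum_(x <- pairmap epsij i0 p) x.

(* Main.v *)
Require Import Defs.
From HB Require Import structures.
From mathcomp Require Import all_boot all_order all_algebra.
From mathcomp Require Import classical_sets reals.
Import Order.TTheory GRing.Theory Num.Theory.
Local Open Scope ring_scope.
Local Open Scope classical_set_scope.

Lemma phi_sum1 (R : realType) (S A : finType)
  (Ptr : S -> S -> A -> R) (mu0 : S -> R) (gamma : R)
  (hgamma : 0 < gamma < 1)
  (hP1 : forall s' a, \sum_(s : S) Ptr s s' a = 1)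
  (hmu1 : \sum_(s : S) mu0 s = 1) d :
  Phi Ptr mu0 gamma d -> \sum_(s : S) \sum_(a : A) d s a = 1.
Proof.
move=> [_ hM].
have E : \sum_s Mop Ptr gamma d s = (1 - gamma) * \sum_(s : S) \sum_(a : A) d s a.
  rewrite /Mop sumrB -mulr_sumr.
  have -> : \sum_s \sum_s' \sum_a' Ptr s s' a' * d s' a' =
            \sum_(s : S) \sum_(a : A) d s a.
    rewrite exchange_big /=; apply: eq_bigr => s' _.
    rewrite exchange_big /=; apply: eq_bigr => a' _.
    by rewrite -mulr_suml hP1 mul1r.
  by rewrite mulrBl mul1r.
have E2 : \sum_s Mop Ptr gamma d s = (1 - gamma).
  by under eq_bigr do rewrite hM; rewrite -mulr_sumr hmu1 mulr1.
move/andP: hgamma => [_ hg1].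
have hne : (1 - gamma) != 0 by rewrite subr_eq0 eq_sym lt_eqF.
apply: (mulfI hne); by rewrite -E E2 mulr1.
Qed.
Arguments phi_sum1 {R S A Ptr mu0 gamma}.

Lemma inner_bounds (R : realType) (S A : finType)
  (Ptr : S -> S -> A -> R) (mu0 : S -> R) (gamma : R)
  (hgamma : 0 < gamma < 1)
  (hP1 : forall s' a, \sum_(s : S) Ptr s s' a = 1)
  (hmu1 : \sum_(s : S) mu0 s = 1) r d :
  simplexSA r -> Phi Ptr mu0 gamma d -> 0 <= inner r d <= 1.
Proof.
move=> [r0 r1] hd.
have h1 := phi_sum1 hgamma hP1 hmu1 d hd.
case: hd => d0 _.
have rle1 : forall s a, r s a <= 1.
  move=> s a; rewrite -r1.
  rewrite (bigD1 s) //= (bigD1 a) //= -addrA lerDl.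
  apply: addr_ge0; first by apply: sumr_ge0 => *; exact: r0.
  by apply: sumr_ge0 => *; apply: sumr_ge0 => *; exact: r0.
apply/andP; split.
  by apply: sumr_ge0 => s _; apply: sumr_ge0 => a _; apply: mulr_ge0.
rewrite -h1 /inner; apply: ler_sum => s _; apply: ler_sum => a _.
by rewrite ler_piMl.
Qed.
Arguments inner_bounds {R S A Ptr mu0 gamma}.

Theorem mainTheorem11 (R : realType) (S A : finType)
  (Ptr : S -> S -> A -> R) (mu0 : S -> R) (gamma : R)
  (hgamma : 0 < gamma < 1)
  (hP0 : forall s s' a, 0 <= Ptr s s' a)
  (hP1 : forall s' a, \sum_(s : S) Ptr s s' a = 1)
  (hmu0 : forall s, 0 <= mu0 s) (hmu1 : \sum_(s : S) mu0 s = 1)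
  (K : nat) (de : 'I_K -> S -> A -> R) (eps : 'I_K -> R)
  (hde : forall k, Phi Ptr mu0 gamma (de k))
  (heps : forall k, 0 <= eps k)
  (Pset : rel 'I_K) (epsij : 'I_K -> 'I_K -> R)
  (hepsij : forall i j, Pset i j -> 0 <= epsij i j)
  (i0 : 'I_K) (p : seq 'I_K)
  (hpath : path Pset i0 p) (hsimple : uniq (i0 :: p))
  (hne : feasRP Ptr mu0 gamma de eps Pset epsij !=set0) :
  path_eps epsij i0 p <= rng Ptr mu0 gamma (feasRP Ptr mu0 gamma de eps Pset epsij).
Proof.
apply: lb_le_inf.
  by case: hne => r hr; exists (maxval Ptr mu0 gamma r - minval Ptr mu0 gamma r), r.
move=> _ [r [[hs _] hP] <-].
have tele : forall i (q : seq 'I_K), path Pset i q ->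
    path_eps epsij i q <= inner r (de i) - inner r (de (last i q)).
  move=> i q; elim: q i => [|x q IH] i /=.
    by move=> _; rewrite /path_eps big_nil subrr.
  move=> /andP [hix hq].
  rewrite /path_eps big_cons -/(path_eps epsij x q).
  have h1 := hP _ _ hix.
  have Ei : inner r (fun s a => de i s a - de x s a) = inner r (de i) - inner r (de x).
    rewrite /inner -sumrB; apply: eq_bigr => s _; rewrite -sumrB.
    by apply: eq_bigr => a _; rewrite mulrBr.
  rewrite Ei in h1.
  have := lerD h1 (IH x hq).
  by rewrite addrA subrK.
apply: (le_trans (tele _ _ hpath)).
apply: lerB.
  apply: sup_upper_bound; last by exists (de i0).
  split; first by exists (inner r (de i0)), (de i0).
  exists 1 => _ [d hd <-].
  by case/andP: (inner_bounds hgamma hP1 hmu1 r d hs hd).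
apply: ge_inf; last by exists (de (last i0 p)).
exists 0 => _ [d hd <-].
by case/andP: (inner_bounds hgamma hP1 hmu1 r d hs hd).
Qed.
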